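(* If $G$ is a graph of girth at least $7$, then $\chi_{\mu_2}(G)\ge \gamma(G)$.
   Context: The girth of $G$ is the length of a shortest cycle (infinite for forests). $\gamma(G)$ is the domination number: the minimum size of a set $D\subseteq V(G)$ such that every vertex outside $D$ has a neighbor in $D$. A set $M\subseteq V(G)$ is a $2$-distance mutual-visibility set if for every two vertices $u,v\in M$ there exists a shortest $u,v$-path of length at most $2$ none of whose internal vertices lies in $M$. $\chi_{\mu_2}(G)$ is the minimum cardinality of a partition of $V(G)$ into $2$-distance mutual-visibility sets. *)

(* Defs.v *)
From mathcomp Require Import all_boot.
Set Implicit Arguments. Unset Strict Implicit. Unset Printing Implicit Defensive.

(* A (finite, simple) graph is a symmetric irreflexive relation e on a finType T. *)

(* girth at least k: every cycle (a duplicate-free closed walk v0 ... v_{m-1} v0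
   with m >= 3 vertices) has at least k vertices; forests satisfy this vacuously. *)
Definition girth_ge (T : finType) (e : rel T) (k : nat) : Prop :=
  forall c : seq T, uniq c -> cycle e c -> 3 <= size c -> k <= size c.

Definition dominating (T : finType) (e : rel T) (D : {set T}) : bool :=
  [forall x, (x \notin D) ==> [exists y in D, e x y]].

Definition domination_number (T : finType) (e : rel T) : nat :=
  #|[arg min_(D < [set: T] | dominating e D) #|D|]|.

Definition shortest_path (T : finType) (e : rel T) (u : T) (p : seq T) (v : T) : Prop :=
  [/\ path e u p, last u p = v &
      forall q : seq T, path e u q -> last u q = v -> size p <= size q].

(* internal vertices of the path u :: p *)
Definition internal (T : finType) (u : T) (p : seq T) : seq T := behead (belast u p).

Definition dmv2 (T : finType) (e : rel T) (M : {set T}) : Prop :=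
  forall u v, u \in M -> v \in M ->
    exists p : seq T, [/\ shortest_path e u p v, size p <= 2 &
                          all (fun x => x \notin M) (internal u p)].

(* P is a partition of V(G) into 2-distance mutual-visibility sets;
   chi_mu2(G) is the minimum of #|P| over such P. *)
Definition dmv2_partition (T : finType) (e : rel T) (P : {set {set T}}) : Prop :=
  partition P [set: T] /\ (forall B, B \in P -> dmv2 e B).

(* Main.v *)
Require Import Defs.
From mathcomp Require Import all_boot.

Lemma edge_neq {T : finType} {e : rel T} (e_irr : irreflexive e) {x y} :
  e x y -> x != y.
Proof. by move=> H; apply/eqP=> E; subst; rewrite e_irr in H. Qed.

Ltac usehyps :=
  repeat match goal with H : is_true (?x != ?y) |- _ =>
    rewrite ?(negbTE H) ?(eq_sym y x) ?(negbTE H); clear H end.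

Lemma C3 {T : finType} {e : rel T} (e_irr : irreflexive e)
  (hgirth : girth_ge e 7) a b c :
  e a b -> e b c -> e c a -> False.
Proof.
move=> h1 h2 h3.
have n1 := edge_neq e_irr h1; have n2 := edge_neq e_irr h2.
have n3 := edge_neq e_irr h3.
have := hgirth [:: a; b; c]; rewrite /= !inE h1 h2 h3.
usehyps; by move=> /(_ isT isT isT).
Qed.

Lemma C4 {T : finType} {e : rel T} (e_irr : irreflexive e)
  (hgirth : girth_ge e 7) a b c d :
  e a b -> e b c -> e c d -> e d a -> a != c -> b != d -> False.
Proof.
move=> h1 h2 h3 h4 n5 n6.
have n1 := edge_neq e_irr h1; have n2 := edge_neq e_irr h2.
have n3 := edge_neq e_irr h3; have n4 := edge_neq e_irr h4.
have := hgirth [:: a; b; c; d]; rewrite /= !inE h1 h2 h3 h4.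
usehyps; by move=> /(_ isT isT isT).
Qed.

Lemma C5 {T : finType} {e : rel T} (e_irr : irreflexive e)
  (hgirth : girth_ge e 7) a b c d f :
  e a b -> e b c -> e c d -> e d f -> e f a ->
  a != c -> a != d -> b != d -> b != f -> c != f -> False.
Proof.
move=> h1 h2 h3 h4 h5 n6 n7 n8 n9 n10.
have n1 := edge_neq e_irr h1; have n2 := edge_neq e_irr h2.
have n3 := edge_neq e_irr h3; have n4 := edge_neq e_irr h4.
have n5 := edge_neq e_irr h5.
have := hgirth [:: a; b; c; d; f]; rewrite /= !inE h1 h2 h3 h4 h5.
usehyps; by move=> /(_ isT isT isT).
Qed.

Lemma C6 {T : finType} {e : rel T} (e_irr : irreflexive e)
  (hgirth : girth_ge e 7) a b c d f g :
  e a b -> e b c -> e c d -> e d f -> e f g -> e g a ->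
  a != c -> a != d -> a != f -> b != d -> b != f -> b != g ->
  c != f -> c != g -> d != g -> False.
Proof.
move=> h1 h2 h3 h4 h5 h6 m1 m2 m3 m4 m5 m6 m7 m8 m9.
have n1 := edge_neq e_irr h1; have n2 := edge_neq e_irr h2.
have n3 := edge_neq e_irr h3; have n4 := edge_neq e_irr h4.
have n5 := edge_neq e_irr h5; have n6 := edge_neq e_irr h6.
have := hgirth [:: a; b; c; d; f; g]; rewrite /= !inE h1 h2 h3 h4 h5 h6.
usehyps; by move=> /(_ isT isT isT).
Qed.

Lemma close_of {T : finType} {e : rel T} {B : {set T}} :
  dmv2 e B -> forall u v, u \in B -> v \in B ->
  u = v \/ e u v \/ exists x, e u x /\ e x v.
Proof.
move=> hB u v hu hv; case: (hB u v hu hv) => p [[hp hl _] hs _].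
move: hp hl hs; case: p => [|a [|b [|c p]]] //=.
- by move=> _ ->; left.
- by rewrite andbT => h <-; right; left.
- by rewrite andbT => /andP[h1 h2] <- _; right; right; exists a.
Qed.

Ltac fin := try done; try (match goal with H : symmetric _ |- _ => by rewrite H end); try (by rewrite eq_sym).

Definition nb {T : finType} (e : rel T) (d : T) : {set T} :=
  [set w | (w == d) || e d w].

Lemma claim {T : finType} {e : rel T} (e_sym : symmetric e)
  (e_irr : irreflexive e) (hgirth : girth_ge e 7) (B : {set T}) :
  dmv2 e B -> forall u, u \in B -> exists d, B \subset nb e d.
Proof.
move=> hB u0 hu0; have cl := close_of hB.
have C3' := C3 e_irr hgirth; have C4' := C4 e_irr hgirth.
have C5' := C5 e_irr hgirth; have C6' := C6 e_irr hgirth.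
case: (boolP [exists u, exists v, [&& u \in B, v \in B & e u v]]).
- case/existsP=> u /existsP[v /and3P[hu hv huv]].
  have sub : forall w, w \in B -> (w \in nb e u) || (w \in nb e v).
    move=> w hw; rewrite !inE.
    case: (cl u w hu hw) => [->|[->|[x [ux xw]]]]; rewrite ?eqxx ?orbT //.
    case: (cl v w hv hw) => [->|[->|[y [vy yw]]]]; rewrite ?eqxx ?orbT //.
    case: (boolP (w == u)) => //= wu; case: (boolP (e u w)) => //= nuw.
    case: (boolP (w == v)) => //= wv; case: (boolP (e v w)) => //= nvw.
    case: (eqVneq x y) => [exy|nxy].
      by subst y; exfalso; apply: (C3' u v x huv vy); rewrite e_sym.
    exfalso; apply: (C5' u v y w x huv vy yw); fin.
    + by apply/eqP=> E; subst y; rewrite yw in nuw.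
    + by apply/eqP=> E; subst x; rewrite xw in nvw.
  case: (boolP (B \subset nb e u)) => [h|]; first by exists u.
  case/subsetPn=> w1 hw1 n1; exists v; apply/subsetP=> w2 hw2.
  apply/negPn/negP=> n2.
  have := sub w1 hw1; rewrite (negbTE n1) /= inE => /orP[/eqP E|vw1].
    by subst w1; move: n1; rewrite inE huv orbT.
  have := sub w2 hw2; rewrite (negbTE n2) orbF inE => /orP[/eqP E|uw2].
    by subst w2; move: n2; rewrite inE e_sym huv orbT.
  move: n1 n2; rewrite !inE !negb_or => /andP[n1a n1b] /andP[n2a n2b].
  case: (cl w1 w2 hw1 hw2) => [E|[h12|[z [h1z hz2]]]].
  + by subst w2; rewrite uw2 in n1b.
  + apply: (C4' u v w1 w2 huv vw1 h12); fin.
  + apply: (C5' u v w1 z w2 huv vw1 h1z hz2); fin.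
    * by apply/eqP=> E; subst z; rewrite e_sym h1z in n1b.
    * by apply/eqP=> E; subst z; rewrite hz2 in n2b.
    * by apply/eqP=> E; subst w2; rewrite uw2 in n1b.
- rewrite negb_exists => /forallP noedge.
  have ne : forall a b, a \in B -> b \in B -> e a b = false.
    move=> a b ha hb; move: (noedge a); rewrite negb_exists => /forallP/(_ b).
    by rewrite ha hb => /negbTE.
  case: (boolP (B \subset [set u0])) => [h|].
    by exists u0; apply: (subset_trans h); apply/subsetP=> w; rewrite !inE => ->.
  case/subsetPn=> v hv; rewrite inE => nvu.
  case: (cl u0 v hu0 hv) => [E|[h|[x [ux xv]]]].
  + by rewrite E eqxx in nvu.
  + by rewrite ne in h.
  exists x; apply/subsetP=> w hw; rewrite inE.
  case: (eqVneq w u0) => [->|wu]; first by rewrite e_sym ux orbT.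
  case: (eqVneq w v) => [->|wv]; first by rewrite xv orbT.
  case: (cl u0 w hu0 hw) => [E|[h|[y [uy yw]]]].
  + by rewrite E eqxx in wu.
  + by rewrite ne in h.
  case: (cl v w hv hw) => [E|[h|[z [vz zw]]]].
  + by rewrite E eqxx in wv.
  + by rewrite ne in h.
  case: (eqVneq y x) => [E|yx]; first by subst y; rewrite yw orbT.
  case: (eqVneq z x) => [E|zx]; first by subst z; rewrite zw orbT.
  exfalso.
  case: (eqVneq y z) => [E|yz].
    subst z; apply: (C4' u0 x v y ux xv vz); fin.
  apply: (C6' u0 x v z w y ux xv vz zw); fin.
  + by apply/eqP=> E; subst z; rewrite ne in zw.
  + by apply/eqP=> E; subst w; rewrite ne in ux.
  + by apply/eqP=> E; subst y; rewrite ne in yw.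
Qed.

Lemma dom_le {T : finType} (e : rel T) (D : {set T}) :
  dominating e D -> domination_number e <= #|D|.
Proof.
move=> hD; rewrite /domination_number.
have hT : dominating e [set: T].
  by apply/forallP=> x; rewrite inE.
by case: arg_minnP => // A _; apply.
Qed.

Theorem theorem3p4 (T : finType) (e : rel T)
    (e_sym : symmetric e) (e_irr : irreflexive e)
    (hgirth : girth_ge e 7) :
  forall P : {set {set T}}, dmv2_partition e P -> domination_number e <= #|P|.
Proof.
move=> P [hpart hdmv].
case: (pickP (fun _ : T => true)) => [x0 _|hempty].
- pose f := fun B : {set T} => odflt x0 [pick d | B \subset nb e d].
  apply: (leq_trans (@dom_le _ e (f @: P) _)); last exact: leq_imset_card.
  have hcov := cover_partition hpart.
  apply/forallP=> x; apply/implyP=> hx.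
  have : x \in cover P by rewrite hcov inE.
  case/bigcupP=> B hB hxB.
  have hfB : B \subset nb e (f B).
    rewrite /f; case: pickP => [d hd|hno] //=.
    have [d hd] := claim e_sym e_irr hgirth B (hdmv B hB) _ hxB.
    by rewrite hno in hd.
  have : x \in nb e (f B) by apply: (subsetP hfB).
  rewrite inE => /orP[/eqP E|h].
    by move: hx; rewrite E imset_f.
  by apply/existsP; exists (f B); rewrite imset_f // e_sym.
- apply: (leq_trans (@dom_le _ e set0 _)); last by rewrite cards0.
  by apply/forallP=> x; have := hempty x.
Qed.
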